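(* Consider the lifted multi-agent system described in the context, run with the dynamic edge weights of Algorithm 1 (MWN-PPAC). Then the system achieves asymptotic average consensus: $$\lim_{k\to\infty}\boldsymbol{x}(k)=\mathds{1}_n\otimes \mathrm{Avg}(\boldsymbol{x}(0)),\qquad \mathrm{Avg}(\boldsymbol{x}(0))=\frac1n\sum_{i=1}^n \boldsymbol{x}_i(0)\in\mathbb{R}^{D}.$$
   Context: Setting: $n>1$ agents, communication graph $\mathcal{G}=(\mathcal{V},\mathcal{E})$ with $\mathcal{V}=\{1,\dots,n\}$, undirected and connected; $\mathcal{N}_i=\{j:(i,j)\in\mathcal{E}\}$. Each agent originally has a real state in $\mathbb{R}^d$ and lifts it by prepending a virtual state in $\mathbb{R}^{d'}$ ($d'\ge 3$), giving $\boldsymbol{x}_i(k)\in\mathbb{R}^{D}$, $D=d+d'$ (first $d'$ coordinates virtual, last $d$ coordinates real). Update rule, with fixed $\sigma>0$: $$\boldsymbol{x}_i(k+1)=\boldsymbol{x}_i(k)+\sigma\sum_{j\in\mathcal{N}_i}A_{ij}(k)\big(\boldsymbol{x}_j(k)-\boldsymbol{x}_i(k)\big),\quad k\in\mathbb{N},$$ and $\boldsymbol{x}(k)=(\boldsymbol{x}_1(k)^\top,\dots,\boldsymbol{x}_n(k)^\top)^\top$. Auxiliary vectors: $\boldsymbol{v}_1,\dots,\boldsymbol{v}_D\in\mathbb{R}^D$ nonzero and mutually orthogonal, each with at least 2 nonzero entries, $\boldsymbol{v}_1$ having fewer than $d'$ nonzero entries, and all entries of $\boldsymbol{v}_D$ nonzero.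 Let $P_{\boldsymbol v}=\boldsymbol v\boldsymbol v^\top/(\boldsymbol v^\top\boldsymbol v)$. Edge weights (Algorithm 1): at $k=0$, $A_{ij}(0)=A_{ji}(0)\in\mathbb{R}^{D\times D}$ for each edge; if one endpoint is legitimate and the other honest-but-curious, $A_{ij}(0)=\alpha_{ij}P_{\boldsymbol v_1}+\beta_{ij}P_{\boldsymbol v_D}$ with $\alpha_{ij},\beta_{ij}>0$, otherwise $A_{ij}(0)$ is arbitrary. For $k\ge1$ and $(i,j)\in\mathcal{E}$: $A_{ij}(k)=A_{ji}(k)=\gamma_{ij}^{\rho(k)}P_{\boldsymbol v_{\rho(k)}}+\zeta_{ij}^{\rho(k)}P_{\boldsymbol v_D}$, where $d^*=D-1$, $\rho(k)=k \bmod d^*$ if this is nonzero and $\rho(k)=d^*$ otherwise, and $0<\gamma_{ij}^{\rho(k)},\zeta_{ij}^{\rho(k)}<\frac{1}{4(n-1)\sigma}$ (with $\gamma_{ij}=\gamma_{ji}$, $\zeta_{ij}=\zeta_{ji}$). $A_{ij}(k)=0$ if $(i,j)\notin\mathcal{E}$. *)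

(* Defs.v *)
From HB Require Import structures.
From mathcomp Require Import all_boot all_order all_algebra.
From mathcomp Require Import all_classical all_reals all_analysis.
Set Implicit Arguments. Unset Strict Implicit. Unset Printing Implicit Defensive.
Import Order.TTheory GRing.Theory Num.Theory.
Local Open Scope ring_scope.

Definition projvec (R : realType) (D : nat) (v : 'cV[R]_D) : 'M[R]_D :=
  ((v^T *m v) 0 0)^-1 *: (v *m v^T).

Definition nnz (R : realType) (D : nat) (v : 'cV[R]_D) : nat :=
  #|[set c : 'I_D | v c 0 != 0]|.

Definition rho (dstar k : nat) : nat :=
  if (k %% dstar == 0)%N then dstar else (k %% dstar)%N.

Definition avg (R : realType) (n D : nat) (x0 : 'I_n -> 'cV[R]_D) : 'cV[R]_D :=
  (n%:R)^-1 *: \sum_(i < n) x0 i.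

(* Main.v *)
Require Import Defs.
From HB Require Import structures.
From mathcomp Require Import all_boot all_order all_algebra.
From mathcomp Require Import all_classical all_reals all_analysis.
From mathcomp Require Import ring lra.
Import Order.TTheory GRing.Theory Num.Theory.
Import numFieldNormedType.Exports.
Local Open Scope ring_scope.
Local Open Scope classical_set_scope.
Set Implicit Arguments. Unset Strict Implicit.
Lemma cs_sum (R : realType) (I : finType) (P : pred I) (a : I -> R) :
  (\sum_(j | P j) a j) ^+ 2 <= #|P|%:R * \sum_(j | P j) (a j) ^+ 2.
Proof.
have cst : forall (c : R), \sum_(k | P k) c = #|P|%:R * c.
  by move=> c; rewrite sumr_const mulr_natl.
set S := \sum_(j | P j) a j ^+ 2.
have -> : #|P|%:R * S =
   \sum_(j | P j) \sum_(k | P k) (a j ^+ 2 + a k ^+ 2) / 2.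
  have -> : \sum_(j | P j) \sum_(k | P k) (a j ^+ 2 + a k ^+ 2) / 2 =
     \sum_(j | P j) (#|P|%:R * a j ^+ 2 + S) / 2.
    apply: eq_bigr => j _; rewrite -big_distrl /= big_split /= cst //.
  rewrite -big_distrl /= big_split /= cst -big_distrr /=.
  rewrite -/S; field; by [].
rewrite expr2 big_distrl /=.
apply: ler_sum => j Pj; rewrite big_distrr /=; apply: ler_sum => k Pk.
have := sqr_ge0 (a j - a k); rewrite !expr2 => h; lra.
Qed.

Lemma antisym_sum (R : realType) (m : nat) (I : finType) (f : I -> I -> 'cV[R]_m) :
  (forall i j, f i j = - f j i) -> \sum_i \sum_j f i j = 0.
Proof.
move=> Hf; set T := \sum_i \sum_j f i j.
have HT : T = - T.
  rewrite {1}/T exchange_big /= -sumrN; apply: eq_bigr => i _.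
  rewrite -sumrN; apply: eq_bigr => j _; exact: Hf.
have : 2%:R *: T = 0 by rewrite scaler_nat mulr2n {1}HT addNr.
by move/eqP; rewrite scaler_eq0 pnatr_eq0 /= => /eqP.
Qed.

Lemma antisym_sumR (R : realType) (I : finType) (f : I -> I -> R) :
  (forall i j, f i j = - f j i) -> \sum_i \sum_j f i j = 0.
Proof.
move=> Hf; set T := \sum_i \sum_j f i j.
have HT : T = - T.
  rewrite {1}/T exchange_big /= -sumrN; apply: eq_bigr => i _.
  rewrite -sumrN; apply: eq_bigr => j _; exact: Hf.
lra.
Qed.

Lemma symm_sum (R : realType) (I : finType) (W : I -> I -> R) (e : I -> R) :
  (forall i j, W i j = W j i) ->
  2 * \sum_i \sum_j W i j * (e j - e i) * e i =
  - \sum_i \sum_j W i j * (e i - e j) ^+ 2.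
Proof.
move=> HW; set T := \sum_i \sum_j W i j * (e j - e i) * e i.
have HT : T = \sum_i \sum_j W i j * (e i - e j) * e j.
  rewrite /T exchange_big /=; apply: eq_bigr => i _; apply: eq_bigr => j _.
  by rewrite HW.
rewrite mulr2n mulrDl mul1r {2}HT /T -big_split -sumrN /=.
apply: eq_bigr => i _; rewrite -big_split -sumrN /=; apply: eq_bigr => j _.
ring.
Qed.

Lemma le_sum_term (R : realType) (I : finType) (F : I -> R) i :
  (forall j, 0 <= F j) -> F i <= \sum_j F j.
Proof.
move=> H; rewrite (bigD1 i) //= lerDl; apply: sumr_ge0 => j _; exact: H.
Qed.

Definition Sadj (R : realType) n (adj : rel 'I_n) (f : 'I_n -> R) :=
  \sum_i \sum_j (if adj i j then (f i - f j)^+2 else 0).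
Arguments Sadj {R n}.

Lemma Sadj_ge0 (R : realType) n (adj : rel 'I_n) (f : 'I_n -> R) : 0 <= Sadj adj f.
Proof.
apply: sumr_ge0 => i _; apply: sumr_ge0 => j _; case: ifP => _ //; exact: sqr_ge0.
Qed.

Lemma Sadj_edge (R : realType) n (adj : rel 'I_n) (f : 'I_n -> R) i j :
  adj i j -> (f i - f j)^+2 <= Sadj adj f.
Proof.
move=> Hij.
have h : forall i j, 0 <= (if adj i j then (f i - f j)^+2 else 0).
  by move=> a b; case: ifP => _ //; exact: sqr_ge0.
have s1 : \sum_j (if adj i j then (f i - f j)^+2 else 0) <= Sadj adj f.
  rewrite /Sadj; apply: (@le_sum_term R 'I_n (fun k => \sum_j (if adj k j then (f k - f j)^+2 else 0)) i).
  by move=> k; apply: sumr_ge0.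
have s2 : (if adj i j then (f i - f j)^+2 else 0) <= \sum_j (if adj i j then (f i - f j)^+2 else 0).
  by apply: (@le_sum_term R 'I_n (fun k => (if adj i k then (f i - f k)^+2 else 0)) j).
apply: le_trans s1; apply: le_trans s2; by rewrite Hij.
Qed.

Lemma path_bound (R : realType) n (adj : rel 'I_n) (f : 'I_n -> R) x p :
  path adj x p -> (f x - f (last x p))^+2 <= (4 ^ size p)%:R * Sadj adj f.
Proof.
elim: p x => [|y p IH] x /=.
  by move=> _; rewrite subrr expr0n /= mul1r Sadj_ge0.
move=> /andP [Hxy Hp].
have h1 := Sadj_edge f Hxy.
have h2 := IH y Hp.
have h0 := Sadj_ge0 adj f.
have h3 : 1 <= (4 ^ size p)%:R :> R by rewrite ler1n expn_gt0.
rewrite expnS natrM.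
have := sqr_ge0 ((f x - f y) - (f y - f (last y p))).
move: h1 h2 h3 h0; set a := f x - f y; set b := f y - f (last y p).
set K := (4 ^ size p)%:R; set S := Sadj adj f.
have -> : f x - f (last y p) = a + b by rewrite /a /b; ring.
rewrite !expr2 => h1 h2 h3 h0 h4.
have h5 : 0 <= (K - 1) * S by apply: mulr_ge0 => //; lra.
lra.
Qed.

Lemma poincare (R : realType) n (adj : rel 'I_n) (f : 'I_n -> R) i j :
  connect adj i j -> (f i - f j)^+2 <= (4 ^ n)%:R * Sadj adj f.
Proof.
case/connectP => p Hp ->.
case: (shortenP Hp) => p' Hp' Hu _.
apply: le_trans (path_bound f Hp') _.
apply: ler_wpM2r; first exact: Sadj_ge0.
rewrite ler_nat leq_exp2l //.
have := card_uniqP Hu; move=> /= Hc.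
have := max_card (mem (i :: p')); rewrite Hc card_ord /=.
by move/ltnW.
Qed.

Lemma scalar_consensus (R : realType) (n : nat) (adj : rel 'I_n)
  (W : nat -> 'I_n -> 'I_n -> R) (y : nat -> 'I_n -> R) (delta : R) (N : nat) :
  (0 < n)%N -> (forall i j, connect adj i j) ->
  (forall k i j, W k i j = W k j i) -> (forall k i j, 0 <= W k i j) ->
  (forall k i j, (n.-1)%:R * W k i j <= 1/2) ->
  0 < delta ->
  (forall k, exists2 k', (k <= k' < k + N)%N & forall i j, adj i j -> delta <= W k' i j) ->
  (forall k i, y k.+1 i = y k i + \sum_j W k i j * (y k j - y k i)) ->
  forall i, (fun k => y k i) @ \oo --> (n%:R)^-1 * \sum_j y 0%N j.
Proof.
move=> n0 conn Wsym W0 Wb d0 act yS i.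
set a := (n%:R)^-1 * \sum_j y 0%N j.
have sumS : forall k, \sum_j y k j = \sum_j y 0%N j.
  elim=> // k IH; rewrite -IH; under eq_bigr => j _ do rewrite yS.
  rewrite big_split /= antisym_sumR ?addr0 //.
  by move=> p q; rewrite Wsym; ring.
set e := fun k j => y k j - a.
have nR : (n%:R : R) != 0 by rewrite pnatr_eq0 -lt0n.
have sume : forall k, \sum_j e k j = 0.
  move=> k; rewrite /e sumrB sumS sumr_const card_ord /a -mulr_natr.
  by field.
have eS : forall k j, e k.+1 j = e k j + \sum_l W k j l * (e k l - e k j).
  move=> k j; rewrite /e yS.
  have -> : \sum_l W k j l * (y k l - a - (y k j - a)) = \sum_l W k j l * (y k l - y k j).
    by apply: eq_bigr => l _; congr (_ * _); ring.
  ring.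
set V := fun k => \sum_j e k j ^+ 2.
set Q := fun k => \sum_j \sum_l W k j l * (e k j - e k l) ^+ 2.
have Q0 : forall k, 0 <= Q k.
  move=> k; apply: sumr_ge0 => j _; apply: sumr_ge0 => l _.
  by apply: mulr_ge0 => //; exact: sqr_ge0.
have V0 : forall k, 0 <= V k.
  by move=> k; apply: sumr_ge0 => j _; exact: sqr_ge0.
have dec : forall k, V k.+1 <= V k - Q k / 2.
  move=> k; set g := fun j => \sum_l W k j l * (e k l - e k j).
  have HV : V k.+1 = V k + 2 * \sum_j \sum_l W k j l * (e k l - e k j) * e k j
                     + \sum_j g j ^+ 2.
    rewrite /V; under eq_bigr => j _ do rewrite eS.
    rewrite big_distrr /= -!big_split /=; apply: eq_bigr => j _.
    rewrite -big_distrl /= -/(g j); ring.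
  have Hsym := symm_sum (e k) (Wsym k).
  have Hg : \sum_j g j ^+ 2 <= Q k / 2.
    rewrite /Q big_distrl /=; apply: ler_sum => j _.
    rewrite /g (bigD1 j) //= subrr mulr0 add0r.
    apply: le_trans (cs_sum (predC1 j) _) _.
    rewrite cardC1 card_ord.
    rewrite [X in _ <= X / 2](bigD1 j) //= subrr expr0n /= mulr0 add0r.
    rewrite big_distrr big_distrl /=; apply: ler_sum => l _.
    have := Wb k j l; have := W0 k j l; have := sqr_ge0 (e k j - e k l).
    have -> : (e k l - e k j) = - (e k j - e k l) by ring.
    set w := W k j l; set t := (e k j - e k l) ^+ 2; set m := (n.-1)%:R.
    rewrite exprMn sqrrN -/t => ht hw hb.
    have : 0 <= (1/2 - m * w) * (w * t) by apply: mulr_ge0 => //; [lra | exact: mulr_ge0].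
    rewrite expr2; lra.
  rewrite HV Hsym -/(Q k); lra.
set K := (4 ^ n)%:R : R.
set nn := n%:R : R.
have nn0 : 0 < nn by rewrite /nn ltr0n.
have K0 : 0 < K by rewrite /K ltr0n expn_gt0.
have poinc : forall k, (forall j l, adj j l -> delta <= W k j l) ->
    delta * V k <= nn * K * Q k.
  move=> k Hact.
  have S0 := Sadj_ge0 adj (e k).
  have hS : delta * Sadj adj (e k) <= Q k.
    rewrite /Sadj big_distrr /=; apply: ler_sum => j _.
    rewrite big_distrr /=; apply: ler_sum => l _.
    case: ifP => Hjl.
      apply: ler_wpM2r; [exact: sqr_ge0 | exact: Hact].
    by rewrite mulr0; apply: mulr_ge0 => //; exact: sqr_ge0.
  have he : forall j, e k j ^+ 2 <= K * Sadj adj (e k).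
    move=> j.
    have hs : \sum_l (e k j - e k l) = nn * e k j.
      by rewrite sumrB sume subr0 sumr_const card_ord /nn mulr_natl.
    have hc := cs_sum xpredT (fun l => e k j - e k l).
    rewrite hs cardT size_enum_ord -/nn in hc.
    have hb : \sum_l (e k j - e k l) ^+ 2 <= nn * (K * Sadj adj (e k)).
      have -> : nn * (K * Sadj adj (e k)) = \sum_(l : 'I_n) (K * Sadj adj (e k)).
        by rewrite sumr_const card_ord /nn mulr_natl.
      apply: ler_sum => l _; exact: poincare.
    have h2 : nn * nn * e k j ^+ 2 <= nn * nn * (K * Sadj adj (e k)).
      have h3 := le_trans hc (ler_wpM2l (ltW nn0) hb).
      by move: h3; rewrite exprMn expr2 !mulrA.
    by move: h2; rewrite ler_pM2l // mulr_gt0.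
  have hV : V k <= nn * (K * Sadj adj (e k)).
    have -> : nn * (K * Sadj adj (e k)) = \sum_(l : 'I_n) (K * Sadj adj (e k)).
      by rewrite sumr_const card_ord /nn mulr_natl.
    by apply: ler_sum => l _; exact: he.
  have : delta * V k <= delta * (nn * (K * Sadj adj (e k))) by rewrite ler_pM2l.
  move=> h; apply: le_trans h _.
  have -> : delta * (nn * (K * Sadj adj (e k))) = nn * K * (delta * Sadj adj (e k)) by ring.
  by apply: ler_wpM2l => //; apply: mulr_ge0; exact: ltW.
set eps := delta / (2 * nn * K).
have eps0 : 0 < eps by rewrite /eps divr_gt0 // !mulr_gt0.
set q := 1 - Num.min eps (1/2).
have qge : 1/2 <= q.
  have : Num.min eps (1/2) <= 1/2 by rewrite ge_min lexx orbT.
  rewrite /q; lra.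
have qlt : q < 1.
  rewrite /q; have : 0 < Num.min eps (1/2) by rewrite lt_min eps0 /=; lra.
  lra.
have mono1 : forall k, V k.+1 <= V k.
  by move=> k; apply: le_trans (dec k) _; have := Q0 k; lra.
have mono : forall k l, (k <= l)%N -> V l <= V k.
  move=> k l /subnK <-; elim: (l - k)%N => [|m IH] //=.
  by rewrite addSn; apply: le_trans (mono1 _) IH.
have stepq : forall k, (forall j l, adj j l -> delta <= W k j l) -> V k.+1 <= q * V k.
  move=> k Hact; have hp := poinc k Hact.
  have h1 : eps * V k <= Q k / 2.
    rewrite /eps mulrAC ler_pdivrMr; last by rewrite !mulr_gt0.
    have -> : Q k / 2 * (2 * nn * K) = nn * K * Q k by field.
    exact: hp.
  have h2 : Num.min eps (1/2) * V k <= eps * V k.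
    by apply: ler_wpM2r => //; rewrite ge_min lexx.
  apply: le_trans (dec k) _; rewrite /q; move: h1 h2; lra.
have geo : forall m k, (m * N <= k)%N -> V k <= q ^+ m * V 0%N.
  elim=> [|m IH] k Hk; first by rewrite expr0 mul1r; apply: mono.
  have [k' /andP [h1 h2] Hact] := act (m * N)%N.
  have h3 : (k'.+1 <= k)%N by apply: leq_trans Hk; rewrite mulSn addnC.
  apply: le_trans (mono _ _ h3) _.
  apply: le_trans (stepq _ Hact) _.
  rewrite exprS -mulrA; apply: ler_wpM2l; first by lra.
  exact: IH.
apply/cvgrPdist_le => eta eta0.
have hq : `|q| < 1 by rewrite ger0_norm; lra.
have V00 := V0 0%N.
have pos : 0 < eta ^+ 2 / (V 0%N + 1) by rewrite divr_gt0 ?exprn_gt0 //; lra.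
have := cvg_expr hq; move/cvgrPdist_le/(_ _ pos).
case=> M _ HM.
exists (M * N)%N => // k /= Hk.
have hV := geo M k Hk.
have hqM : `|0 - q ^+ M| <= eta ^+ 2 / (V 0%N + 1) by apply: HM => /=.
rewrite sub0r normrN ger0_norm in hqM; last by rewrite exprn_ge0 //; lra.
have hVk : V k <= eta ^+ 2.
  apply: le_trans hV _.
  apply: le_trans (ler_wpM2r V00 hqM) _.
  rewrite mulrAC ler_pdivrMr; last by lra.
  have : 0 <= eta ^+ 2 by exact: sqr_ge0.
  lra.
have hek : e k i ^+ 2 <= V k.
  by rewrite /V; apply: (@le_sum_term R _ (fun j => e k j ^+ 2) i) => j; exact: sqr_ge0.
have : `|a - y k i| = `|e k i| by rewrite /e distrC.
move=> ->.
have h1 : `|e k i| ^+ 2 <= eta ^+ 2 by rewrite real_normK ?num_real //; apply: le_trans hek hVk.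
have h2 : 0 <= `|e k i| by [].
move: h1; rewrite !expr2 => h1; nra.
Qed.
Lemma norm_pos (R : realType) D (u : 'cV[R]_D) : u != 0 -> 0 < (u^T *m u) 0 0.
Proof.
move=> Hu.
have E : (u^T *m u) 0 0 = \sum_c u c 0 ^+ 2.
  by rewrite !mxE; apply: eq_bigr => c _; rewrite !mxE expr2.
rewrite E lt_def sumr_ge0 ?andbT; last by move=> c _; exact: sqr_ge0.
apply/negP => /eqP H; move/negP: Hu; apply; apply/eqP/matrixP => c j.
rewrite ord1 mxE.
have := @psumr_eq0P R _ xpredT (fun c => u c 0 ^+ 2) (fun c _ => sqr_ge0 (u c 0)) H c isT.
by move/eqP; rewrite sqrf_eq0 => /eqP.
Qed.

Lemma proj_same (R : realType) D (u : 'cV[R]_D) : u != 0 ->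
  u^T *m projvec u = u^T.
Proof.
move=> Hu; rewrite /projvec -scalemxAr mulmxA [u^T *m u]mx11_scalar mul_scalar_mx.
rewrite mxE /= mulr1n scalerA mulVf ?scale1r //; exact: lt0r_neq0 (norm_pos Hu).
Qed.

Lemma proj_orth (R : realType) D (u w : 'cV[R]_D) : u^T *m w = 0 ->
  u^T *m projvec w = 0.
Proof.
by move=> H; rewrite /projvec -scalemxAr mulmxA H mul0mx scaler0.
Qed.

Lemma recon (R : realType) D (w : 'I_D -> 'cV[R]_D) :
  (forall m, w m != 0) -> (forall m m', m != m' -> (w m)^T *m w m' = 0) ->
  forall (z : 'cV[R]_D) c,
  z c 0 = \sum_m ((w m)^T *m z) 0 0 / ((w m)^T *m w m) 0 0 * w m c 0.
Proof.
move=> Hnz Horth z c.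
set nrm := fun m => ((w m)^T *m w m) 0 0.
have nrm0 : forall m, nrm m != 0 by move=> m; exact: lt0r_neq0 (norm_pos (Hnz m)).
set Vm := \matrix_(c, m) w m c 0 : 'M[R]_D.
set Dinv := diag_mx (\row_m (nrm m)^-1).
have H1 : Vm^T *m (Vm *m Dinv) = 1%:M.
  apply/matrixP => m m'; rewrite mul_mx_diag !mxE.
  have -> : \sum_j Vm^T m j * (\matrix_(i, j0) (Vm i j0 * (\row_m (nrm m)^-1) 0 j0)) j m'
       = ((w m)^T *m w m') 0 0 * (nrm m')^-1.
    rewrite !mxE big_distrl /=; apply: eq_bigr => j _; rewrite !mxE; ring.
  case: (eqVneq m m') => [<-|Hne]; first by rewrite -/(nrm m) mulfV.
  by rewrite Horth // mxE mul0r.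
have H2 := mulmx1C H1.
have : z = (Vm *m Dinv) *m Vm^T *m z by rewrite H2 mul1mx.
move/(congr1 (fun M : 'cV[R]_D => M c 0)) => ->.
rewrite -mulmxA mul_mx_diag !mxE; apply: eq_bigr => m _.
rewrite !mxE.
have -> : \sum_j Vm^T m j * z j 0 = \sum_j (w m)^T 0 j * z j 0.
  by apply: eq_bigr => j _; rewrite !mxE.
rewrite /nrm !mxE; ring.
Qed.

Lemma rho_range ds k : (0 < ds)%N -> (1 <= rho ds k <= ds)%N.
Proof.
move=> ds0; rewrite /rho; case: ifP => H; first by rewrite ds0 leqnn.
by rewrite lt0n H /= ltnW // ltn_pmod.
Qed.

Lemma rho_hit ds m t : (0 < ds)%N -> (1 <= m <= ds)%N ->
  exists2 t', (t <= t' < t + ds)%N & rho ds t' = m.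
Proof.
move=> ds0 /andP [m1 mds].
set s := ((m + ds - t %% ds) %% ds)%N.
exists (t + s)%N.
  by rewrite leq_addr /= ltn_add2l ltn_pmod.
have ht : (t %% ds < ds)%N by rewrite ltn_pmod.
have E : ((t + s) %% ds = m %% ds)%N.
  rewrite /s modnDmr -modnDml.
  have -> : (t %% ds + (m + ds - t %% ds) = m + ds)%N.
    by rewrite addnBA ?addKn // ltnW // ltn_addl.
  by rewrite modnDr.
rewrite /rho E.
case: (ltngtP m ds) mds => // [Hlt|->] _.
  by rewrite modn_small // ifF //; apply/negbTE; rewrite -lt0n.
by rewrite modnn eqxx.
Qed.

Lemma sum_cvg (R : realType) (I : Type) (r : seq I) (f : I -> nat -> R) (l : I -> R) :
  (forall m, f m @ \oo --> l m) ->
  (fun k => \sum_(m <- r) f m k) @ \oo --> \sum_(m <- r) l m.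
Proof.
move=> H; elim: r => [|m r IH].
  rewrite big_nil; under eq_fun do rewrite big_nil; exact: cvg_cst.
rewrite big_cons; under eq_fun do rewrite big_cons.
exact: cvgD.
Qed.

Unset Implicit Arguments.

Theorem mainTheorem1
  (R : realType) (n d d' : nat)
  (adj : rel 'I_n)
  (Leg HBC : {set 'I_n})
  (v : nat -> 'cV[R]_(d + d'))
  (sigma : R)
  (A : nat -> 'I_n -> 'I_n -> 'M[R]_(d + d'))
  (alpha beta : 'I_n -> 'I_n -> R)
  (gamma zeta : nat -> 'I_n -> 'I_n -> R)
  (x : nat -> 'I_n -> 'cV[R]_(d + d')) :
  (1 < n)%N ->
  (3 <= d')%N ->
  (forall i j, adj i j = adj j i) ->
  (forall i, ~~ adj i i) ->
  (forall i j, connect adj i j) ->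
  [disjoint Leg & HBC]%bool ->
  (forall m, (1 <= m <= d + d')%N -> v m != 0) ->
  (forall m m', (1 <= m <= d + d')%N -> (1 <= m' <= d + d')%N -> m != m' ->
     (v m)^T *m v m' = 0) ->
  (forall m, (1 <= m <= d + d')%N -> (2 <= nnz (v m))%N) ->
  (nnz (v 1%N) < d')%N ->
  (forall c, v (d + d')%N c 0 != 0) ->
  0 < sigma ->
  (forall k i j, ~~ adj i j -> A k i j = 0) ->
  (forall i j, adj i j -> A 0%N i j = A 0%N j i) ->
  (forall i j, adj i j ->
     (i \in Leg) && (j \in HBC) || (i \in HBC) && (j \in Leg) ->
     [/\ 0 < alpha i j, 0 < beta i j &
         A 0%N i j = alpha i j *: projvec (v 1%N) + beta i j *: projvec (v (d + d')%N)]) ->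
  (forall r i j, (1 <= r <= (d + d').-1)%N -> adj i j ->
     [/\ gamma r i j = gamma r j i, zeta r i j = zeta r j i,
         0 < gamma r i j < (4 * (n%:R - 1) * sigma)^-1 &
         0 < zeta r i j < (4 * (n%:R - 1) * sigma)^-1]) ->
  (forall k i j, (1 <= k)%N -> adj i j ->
     A k i j = gamma (rho (d + d').-1 k) i j *: projvec (v (rho (d + d').-1 k))
             + zeta (rho (d + d').-1 k) i j *: projvec (v (d + d')%N)) ->
  (forall k i, x k.+1 i =
     x k i + sigma *: \sum_(j | adj i j) (A k i j *m (x k j - x k i))) ->
  forall i (c : 'I_(d + d')),
    (fun k => x k i c ord0) @ \oo --> (avg (x 0%N) c ord0 : R).
Proof.
move=> n1 d3 adjS adjI conn disj vnz vorth vnnz v1 vD s0 Aoff A0sym A0form gz Ak xS i c.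
set D := (d + d')%N.
have ds0 : (0 < D.-1)%N.
  have D3 : (3 <= D)%N by rewrite /D; exact: (@leq_trans d' 3 (d + d') d3 (leq_addl d d')).
  by rewrite -subn1 subn_gt0; exact: (@leq_trans 3 2 D isT D3).
have Asym : forall k p q, adj p q -> A k p q = A k q p.
  move=> [|k] p q Hpq; first exact: A0sym.
  have Hqp : adj q p by rewrite adjS.
  have [g1 z1 _ _] := gz _ p q (rho_range k.+1 ds0) Hpq.
  by rewrite (Ak _ _ _ (ltn0Sn k) Hpq) (Ak _ _ _ (ltn0Sn k) Hqp) g1 z1.
have sumx : forall k, \sum_p x k.+1 p = \sum_p x k p.
  move=> k; under eq_bigr => p _ do rewrite xS.
  rewrite big_split /= -scaler_sumr.
  have -> : \sum_p \sum_(q | adj p q) A k p q *m (x k q - x k p) = 0.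
    under eq_bigr => p _ do rewrite big_mkcond /=.
    apply: antisym_sum => p q; rewrite adjS; case: ifP => Hqp //=; last by rewrite oppr0.
    rewrite Asym; last by rewrite adjS.
    by rewrite -mulmxN opprB.
  by rewrite scaler0 addr0.
have avgx : forall k, avg (x k) = avg (x 0%N).
  by elim=> // k IH; rewrite -IH /avg sumx.
pose f := fun t : 'I_D * 'I_n * 'I_n => let: (r, p, q) := t in
  if (1 <= r <= D.-1)%N && adj p q then Num.min (gamma r p q) (zeta r p q) else 1.
pose delta0 := \big[Num.min/1]_t f t.
have delta0_pos : 0 < delta0.
  apply: (big_ind (fun y => 0 < y)) => //; first by move=> a b ha hb; rewrite lt_min ha hb.
  move=> [[r p] q] _ /=; case: ifP => // /andP [Hr Hpq].
  by have [_ _ /andP [g0 _] /andP [z0 _]] := gz r p q Hr Hpq; rewrite lt_min g0 z0.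
have delta0_le : forall r p q, (1 <= r <= D.-1)%N -> adj p q ->
    delta0 <= gamma r p q /\ delta0 <= zeta r p q.
  move=> r p q Hr Hpq.
  have rD : (r < D)%N.
    case/andP: Hr => _ h; apply: leq_ltn_trans h _; rewrite prednK //.
    by apply: leq_trans ds0 (leq_pred _).
  have := bigmin_le 1 (Ordinal rD, p, q) f.
  rewrite /= Hr Hpq /= le_min => /andP [h1 h2].
  by split.
have modecvg : forall m : 'I_D, (fun k => ((v m.+1)^T *m x k.+1 i) 0 0) @ \oo -->
                                 ((v m.+1)^T *m avg (x 0%N)) 0 0.
  move=> m.
  have mD : (1 <= m.+1 <= D)%N by rewrite /= ltn_ord.
  set u := v m.+1.
  pose W := fun k p q => if adj p q then sigma * (gamma (rho D.-1 k.+1) p q * (rho D.-1 k.+1 == m.+1)%:R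
                     + zeta (rho D.-1 k.+1) p q * (m.+1 == D)%:R) else 0.
  have uA : forall k p q, adj p q -> u^T *m A k.+1 p q =
      (gamma (rho D.-1 k.+1) p q * (rho D.-1 k.+1 == m.+1)%:R
                     + zeta (rho D.-1 k.+1) p q * (m.+1 == D)%:R) *: u^T.
    move=> k p q Hpq; rewrite Ak // -/D mulmxDr -(scalemxAr (gamma _ p q)) -(scalemxAr (zeta _ p q)).
    have r1 := rho_range k.+1 ds0.
    have r2 : (1 <= rho D.-1 k.+1 <= D)%N.
      case/andP: r1 => -> h /=; apply: leq_trans h (leq_pred _).
    have DD : (1 <= D <= D)%N by rewrite leqnn andbT; apply: leq_trans ds0 (leq_pred _).
    have P1 : u^T *m projvec (v (rho D.-1 k.+1)) = (rho D.-1 k.+1 == m.+1)%:R *: u^T.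
      case: eqP => [->|Hne]; first by rewrite proj_same ?scale1r //; apply: vnz.
      rewrite proj_orth ?scale0r //; apply: vorth => //.
      by apply/eqP => E; apply: Hne; rewrite E.
    have P2 : u^T *m projvec (v D) = (m.+1 == D)%:R *: u^T.
      case: eqP => [E|Hne]; first by rewrite /u E proj_same ?scale1r //; apply: vnz.
      rewrite proj_orth ?scale0r //; apply: vorth => //.
      by apply/eqP.
    by rewrite P1 P2 !scalerA -scalerDl.
  pose y := fun k p => (u^T *m x k.+1 p) 0 0.
  have yS : forall k p, y k.+1 p = y k p + \sum_q W k p q * (y k q - y k p).
    move=> k p; rewrite /y xS mulmxDr -scalemxAr mulmx_sumr.
    rewrite [in LHS]mxE [X in _ + X]mxE summxE big_mkcond /= mulr_sumr.
    congr (_ + _); apply: eq_bigr => q _.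
    rewrite /W; case: ifP => Hpq; last by rewrite mulr0 mul0r.
    rewrite mulmxA uA // -scalemxAl mxE mulmxBr.
    set a1 := u^T *m x k.+1 q; set a2 := u^T *m x k.+1 p.
    rewrite !mxE; ring.
  have Wsym : forall k p q, W k p q = W k q p.
    move=> k p q; rewrite /W adjS; case: ifP => // Hqp.
    have [g1 z1 _ _] := gz _ q p (rho_range k.+1 ds0) Hqp.
    by rewrite g1 z1.
  have W0 : forall k p q, 0 <= W k p q.
    move=> k p q; rewrite /W; case: ifP => // Hpq.
    have [_ _ /andP [g0 _] /andP [z0 _]] := gz _ p q (rho_range k.+1 ds0) Hpq.
    apply: mulr_ge0; first exact: ltW.
    by apply: addr_ge0; apply: mulr_ge0 => //; exact: ltW.
  have nR : (n%:R : R) = (n.-1)%:R + 1 by rewrite natr1 prednK // ltnW.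
  have t0 : 0 < (n.-1)%:R :> R by rewrite ltr0n -ltnS prednK // ltnW.
  have Wb : forall k p q, (n.-1)%:R * W k p q <= 1/2.
    move=> k p q; rewrite /W; case: ifP => Hpq; last by rewrite mulr0; lra.
    have [_ _ /andP [g0 gb] /andP [z0 zb]] := gz _ p q (rho_range k.+1 ds0) Hpq.
    rewrite nR addrK in gb zb.
    set t := (n.-1)%:R in t0 gb zb *.
    have hpos : 0 < 4 * t * sigma by rewrite !mulr_gt0.
    have hg : gamma (rho D.-1 k.+1) p q * (4 * t * sigma) < 1.
      by rewrite -(ltr_pM2r hpos) mulVf ?gt_eqF // in gb.
    have hz : zeta (rho D.-1 k.+1) p q * (4 * t * sigma) < 1.
      by rewrite -(ltr_pM2r hpos) mulVf ?gt_eqF // in zb.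
    move: hg hz g0 z0.
    case: (_ == _); case: (_ == _) => /= hg hz g0 z0; lra.
  have dpos : 0 < sigma * delta0 by rewrite mulr_gt0.
  have act : forall k, exists2 k', (k <= k' < k + D.-1)%N &
      forall p q, adj p q -> sigma * delta0 <= W k' p q.
    move=> k.
    case: (eqVneq m.+1 D) => [EmD|NmD].
      exists k; first by rewrite leqnn /= -addn1 leq_add2l.
      move=> p q Hpq; rewrite /W Hpq EmD eqxx mulr1 ler_pM2l //.
      have r1 := rho_range k.+1 ds0.
      have [_ _ /andP [g0 _] /andP [z0 _]] := gz _ p q r1 Hpq.
      have [_ hz] := delta0_le _ p q r1 Hpq.
      apply: le_trans hz _; rewrite lerDr; apply: mulr_ge0; [exact: ltW | by []].
    have mds : (1 <= m.+1 <= D.-1)%N.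
      have D0 : (0 < D)%N by apply: leq_trans ds0 (leq_pred _).
      apply/andP; split => //.
      by rewrite -(leq_add2r 1) !addn1 prednK // ltn_neqAle NmD ltn_ord.
    have [t' /andP [h1 h2] Ht] := rho_hit k.+1 ds0 mds.
    exists t'.-1.
      rewrite -ltnS prednK; last by apply: leq_trans h1.
      by rewrite h1 /= -ltnS -addSn.
    have t'0 : (0 < t')%N by apply: leq_trans h1.
    move=> p q Hpq; rewrite /W Hpq prednK // Ht eqxx mulr1 ler_pM2l //.
    have [_ _ /andP [g0 _] /andP [z0 _]] := gz _ p q mds Hpq.
    have [hg _] := delta0_le _ p q mds Hpq.
    apply: le_trans hg _; rewrite lerDl; apply: mulr_ge0; [exact: ltW | by []].
  have nn1 : (0 < n)%N by apply: ltnW.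
  have Hc := scalar_consensus nn1 conn Wsym W0 Wb dpos act yS i.
  have E : (u^T *m avg (x 0%N)) 0 0 = (n%:R)^-1 * \sum_q y 0%N q.
    rewrite -(avgx 1%N) /avg -scalemxAr mulmx_sumr mxE summxE //.
  by rewrite E.
have Hw : forall m : 'I_D, v m.+1 != 0 by move=> m; apply: vnz; rewrite /= ltn_ord.
have Ho : forall m m' : 'I_D, m != m' -> (v m.+1)^T *m v m'.+1 = 0.
  by move=> m m' Hne; apply: vorth; rewrite /= ?ltn_ord.
have E : (fun k => x k.+1 i c ord0) = (fun k => \sum_(m : 'I_D)
    ((v m.+1)^T *m x k.+1 i) 0 0 / ((v m.+1)^T *m v m.+1) 0 0 * v m.+1 c 0).
  by apply/funext => k; rewrite (recon Hw Ho (x k.+1 i) c).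
have H : (fun k => x k.+1 i c ord0) @ \oo --> avg (x 0%N) c ord0.
  rewrite E (recon Hw Ho (avg (x 0%N)) c).
  apply: sum_cvg => m.
  by apply: cvgMr_tmp; apply: cvgMr_tmp; exact: modecvg.
rewrite -(cvg_shiftS (fun k => x k i c ord0)).
exact: H.
Qed.
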